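(* Let $X(t)$ be a Markov process on microstates, partitioned into finitely many macrostates, with macroscopic time step $\tau>0$ and decorrelation times $\tau_I$, and let each macrostate $I$ have a quasistationary distribution $\eta_I$. Let $(X(t),R(t),C(t))$ be the augmented Markov chain with time step $\tau$ on augmented states $(x,I,s)$, and let $T$ be its Markov kernel, $$T(x,I,s;dy,J,t) = \mathbb P^{x,I,s}\big[(X(\tau),R(\tau),C(\tau)) \in (dy,J,t)\big].$$ Define the projector $P$ on functions $f=f(x,I,s)$ of augmented states by $Pf(x,I,s) = \int \eta_I(dz)\, f(z,I,\tau_I)$, let $Q = \mathrm{Id}-P$, and for integers $n\ge 1$ let $K(n) = PT(QT)^{n-1}$. Let $\chi_J(x,I,s) = \delta_{I=J}$ and define matrices $$\mathcal K_{IJ}(n\tau) := K(n)\chi_J(x,I,s), \qquad \mathcal T_{IJ}(n\tau) := \int \eta_I(dx)\,\mathbb P^{x,I,\tau_I}\big[R(n\tau)=J\big]$$ (the former does not depend on $x$ or $s$). Then for every integer $n\ge 1$, $$\mathcal T(n\tau) = \sum_{m=1}^{n} \mathcal K(m\tau)\,\mathcal T((n-m)\tau).$$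
   Context: The macroscopic jump process $R(t)$ (defined at multiples of $\tau$) jumps from its current macrostate $I$ to $J\ne I$ at time $t$ iff $X(t-c)\in J$ for all $0\le c\le \tau_J$; otherwise it stays put. $C(t)$ is the consecutive time $X(t)$ has spent in its current macrostate, with the count stopped at $\tau_J$ if $X(t)\in J$. $\mathbb P^{x,I,s}$ denotes probability for the augmented chain started at $(X(0),R(0),C(0))=(x,I,s)$. A kernel $S(x,I,s;dy,J,t)$ acts on functions by $Sf(x,I,s) = \int\sum_{J,t} S(x,I,s;dy,J,t) f(y,J,t)$. The quasistationary distribution $\eta_I$ is a probability measure on $I$ with $\eta_I(\cdot)=\int\eta_I(dx)\mathbb P(X(t)\in\cdot\mid X(0)=x,\ X(s)\in I,\ s\le t)$ for all $t$. *)

(* Defs.v *)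
From HB Require Import structures.
From mathcomp Require Import all_boot all_order all_algebra.
From mathcomp Require Import all_classical all_reals all_analysis.
Set Implicit Arguments. Unset Strict Implicit. Unset Printing Implicit Defensive.
Import Order.TTheory GRing.Theory Num.Theory.
Local Open Scope classical_set_scope.
Local Open Scope ring_scope.

Definition mstate (k : nat) := 'I_k.+1.
HB.instance Definition _ k := Finite.on (mstate k).
HB.instance Definition _ k := isPointed.Build (mstate k) ord0.
HB.instance Definition _ k := @isMeasurable.Build default_measure_display
  (mstate k) discrete_measurable discrete_measurable0
  discrete_measurableC discrete_measurableU.

(* Augmented states (x, I, s) : microstate, macrostate, counter. *)
Definition aug (dE : measure_display) (E : measurableType dE) (k : nat)
  (R : realType) := (E * mstate k * R)%type.

Section defs.
Context {R : realType} {dE dO : measure_display} {E : measurableType dE}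
  {k : nat} {Om : measurableType dO}.
Local Notation S := (aug E k R).

(* (Pr a, Z) is the augmented Markov chain (X,R,C)(n tau), n = 0,1,2,...,
   started at a = (x,I,s), with transition kernel T: Z 0 = a a.s. and the
   finite-dimensional distributions obey the Markov property with kernel T. *)
Definition augmented_markov_chain (T : R.-pker S ~> S)
  (Pr : S -> probability Om R) (Z : nat -> Om -> S) : Prop :=
  [/\ forall n, measurable_fun setT (Z n),
      forall (a : S) (A : set S), measurable A ->
        Pr a (Z 0%N @^-1` A) = \d_a A &
      forall (a : S) (n : nat) (A : nat -> set S),
        (forall i, measurable (A i)) ->
        Pr a (\bigcap_(i < n.+2) (Z i @^-1` A i)) =
        (\int[Pr a]_(w in \bigcap_(i < n.+1) (Z i @^-1` A i))
            T (Z n w) (A n.+1))%E].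

Definition Top (T : R.-pker S ~> S) (f : S -> R) : S -> R :=
  fun a => Rintegral (T a) setT f.

Definition Pop (eta : mstate k -> probability E R) (tauI : mstate k -> R)
  (f : S -> R) : S -> R :=
  fun a => Rintegral (eta a.1.2) setT (fun z => f (z, a.1.2, tauI a.1.2)).

Definition Qop eta tauI (f : S -> R) : S -> R :=
  fun a => f a - Pop eta tauI f a.

Definition Kop (T : R.-pker S ~> S) eta tauI (n : nat) (f : S -> R) : S -> R :=
  Pop eta tauI (Top T (iter n.-1 (fun g => Qop eta tauI (Top T g)) f)).

Definition chi (J : mstate k) : S -> R := fun a => (a.1.2 == J)%:R.

Definition Tmat (eta : mstate k -> probability E R) (tauI : mstate k -> R)
  (Pr : S -> probability Om R) (Z : nat -> Om -> S) (n : nat)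
  (I J : mstate k) : R :=
  Rintegral (eta I) setT
    (fun x => fine (Pr (x, I, tauI I) [set w | (Z n w).1.2 = J])).

Definition Kmat (T : R.-pker S ~> S) eta tauI (n : nat) (I J : mstate k)
  (x : E) (s : R) : R :=
  Kop T eta tauI n (chi J) (x, I, s).
End defs.

(* Main.v *)
Require Import Defs.
From HB Require Import structures.
From mathcomp Require Import all_boot all_order all_algebra.
From mathcomp Require Import all_classical all_reals all_analysis.
From mathcomp Require Import measurable_realfun.
Import Order.TTheory GRing.Theory Num.Theory.
Local Open Scope classical_set_scope.
Local Open Scope ring_scope.


Definition bmf {R : realType} {d} {X : measurableType d} (f : X -> R) :=
  measurable_fun setT f /\ exists M, forall a, `|f a| <= M.

Section gen.
Context {R : realType} {d} {X : measurableType d}.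
Variable mu : {measure set X -> \bar R}.
Hypothesis mu1 : mu setT = 1%E.

Lemma bm_int {f : X -> R} : bmf f -> mu.-integrable setT (EFin \o f).
Proof.
move=> [mf [M hM]]; apply: measurable_bounded_integrable => //.
  by rewrite mu1 ltry.
exists M; split; first by rewrite num_real.
by move=> y /ltW My x _; apply: le_trans (hM x) My.
Qed.

Lemma Rint_add f g : bmf f -> bmf g ->
  Rintegral mu setT (fun x => f x + g x) = Rintegral mu setT f + Rintegral mu setT g.
Proof. by move=> hf hg; apply: RintegralD => //; exact: bm_int. Qed.

Lemma Rint_scale c f : bmf f ->
  Rintegral mu setT (fun x => c * f x) = c * Rintegral mu setT f.
Proof. by move=> hf; apply: RintegralZl => //; exact: bm_int. Qed.

Lemma Rint_bound f M : bmf f -> (forall a, `|f a| <= M) -> `|Rintegral mu setT f| <= M.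
Proof.
move=> hf hM.
have H1 := le_normr_Rintegral measurableT (bm_int hf). apply: le_trans H1 _.
apply: le_trans.
  apply: (@le_Rintegral _ _ _ mu setT _ (fun=> M)) => //.
  - exact: integrable_norm (bm_int hf).
  - apply: bm_int; split => //; exists `|M| => _; exact: lexx.
by rewrite Rintegral_cst // mu1 mulr1.
Qed.
End gen.


Section ops.
Context {R : realType} {dE : measure_display} {E : measurableType dE} {k : nat}.
Local Notation S := (aug E k R).
Variables (T : R.-pker S ~> S) (eta : mstate k -> probability E R) (tauI : mstate k -> R).

Lemma meas_fst2 (h : mstate k -> R) :
  measurable_fun setT (fun a : S => h a.1.2).
Proof.
apply: (@measurableT_comp _ _ _ _ _ _ h _ (fun a : S => a.1.2)).
  by move=> _ A _; rewrite setTI.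
by apply: measurableT_comp => //; apply: measurableT_comp.
Qed.

Lemma bm_fst2 (h : mstate k -> R) : bmf (fun a : S => h a.1.2).
Proof.
split; first exact: meas_fst2.
exists (\sum_(K : mstate k) `|h K|) => a.
by rewrite (bigD1 a.1.2) //= lerDl sumr_ge0.
Qed.

Lemma T1 a : T a setT = 1%E. Proof. exact: prob_kernel. Qed.

Lemma Top_add f g : bmf f -> bmf g ->
  Top T (fun x => f x + g x) = (fun a => Top T f a + Top T g a).
Proof. by move=> hf hg; apply/funext => a; apply: Rint_add => //; exact: T1. Qed.

Lemma Top_scale c f : bmf f -> Top T (fun x => c * f x) = (fun a => c * Top T f a).
Proof. by move=> hf; apply/funext => a; apply: Rint_scale => //; exact: T1. Qed.

Lemma Top_bm f : bmf f -> bmf (Top T f).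
Proof.
move=> hf; split; last first.
  case: (hf) => _ [M hM]; exists M => a; apply: Rint_bound => //; exact: T1.
rewrite /Top /Rintegral.
have -> : (fun a => fine (\int[T a]_(x in setT) (f x)%:E)) =
  (fun a => fine ((fun a => \int[T a]_(x in setT) ((EFin \o f)^\+ x))%E a
                - (fun a => \int[T a]_(x in setT) ((EFin \o f)^\- x))%E a))%E.
  by apply/funext => a; rewrite integralE.
have mfine : measurable_fun [set: \bar R] (@fine R) by exact: fine_measurable.
apply: (measurableT_comp mfine).
apply: emeasurable_funB.
  apply: (@measurable_fun_integral_kernel _ _ _ _ _ T (measurable_kernel T)) => //.
  apply: measurable_funepos; apply/measurable_EFinP; exact: hf.1.
apply: (@measurable_fun_integral_kernel _ _ _ _ _ T (measurable_kernel T)) => //.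
apply: measurable_funeneg; apply/measurable_EFinP; exact: hf.1.
Qed.

Lemma sec_bm (f : S -> R) (I : mstate k) (c : R) : bmf f -> bmf (fun z : E => f (z, I, c)).
Proof.
case=> mf [M hM]; split; last by exists M.
apply: (measurableT_comp mf).
apply: measurable_fun_pair => //; apply: measurable_fun_pair => //.
Qed.

Lemma Pop_add f g : bmf f -> bmf g ->
  Pop eta tauI (fun x => f x + g x) = (fun a => Pop eta tauI f a + Pop eta tauI g a).
Proof.
move=> hf hg; apply/funext => a; apply: Rint_add; first exact: probability_setT.
  exact: sec_bm. exact: sec_bm.
Qed.

Lemma Pop_scale c f : bmf f ->
  Pop eta tauI (fun x => c * f x) = (fun a => c * Pop eta tauI f a).
Proof.
move=> hf; apply/funext => a; apply: Rint_scale; first exact: probability_setT.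
exact: sec_bm.
Qed.

Lemma Pop_fst2 f : Pop eta tauI f = (fun a => Pop eta tauI f (point, a.1.2, 0)).
Proof. by []. Qed.

Lemma Pop_bm f : bmf f -> bmf (Pop eta tauI f).
Proof.
move=> hf; split.
  rewrite Pop_fst2; exact: (meas_fst2 (fun I => Pop eta tauI f (point, I, 0))).
case: (hf) => _ [M hM]; exists M => a; apply: Rint_bound => //.
  exact: probability_setT.
exact: sec_bm.
Qed.


Lemma bm_add {f g : S -> R} : bmf f -> bmf g -> bmf (fun x => f x + g x).
Proof.
case=> mf [M hM] [mg [N hN]]; split; first exact: measurable_funD.
exists (M + N) => a; apply: le_trans (ler_normD _ _) _; exact: lerD.
Qed.

Lemma bm_scale c {f : S -> R} : bmf f -> bmf (fun x => c * f x).
Proof.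
case=> mf [M hM]; split; first exact: measurable_funM.
exists (`|c| * M) => a; rewrite normrM; apply: ler_wpM2l => //.
Qed.

Lemma bm_sub {f g : S -> R} : bmf f -> bmf g -> bmf (fun x => f x - g x).
Proof.
move=> hf hg; have := bm_add hf (bm_scale (-1) hg).
by congr bmf; apply/funext => x; rewrite mulN1r.
Qed.

Lemma bm0 : bmf (fun _ : S => 0 : R).
Proof. by split => //; exists 0 => a; rewrite normr0. Qed.

Definition lin (F : (S -> R) -> (S -> R)) :=
  [/\ forall f, bmf f -> bmf (F f),
      forall f g, bmf f -> bmf g -> F (fun x => f x + g x) = (fun a => F f a + F g a) &
      forall c f, bmf f -> F (fun x => c * f x) = (fun a => c * F f a)].

Lemma lin_Top : lin (Top T).
Proof. split; [exact: Top_bm | exact: Top_add | exact: Top_scale]. Qed.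

Lemma lin_Pop : lin (Pop eta tauI).
Proof. split; [exact: Pop_bm | exact: Pop_add | exact: Pop_scale]. Qed.

Lemma lin_Qop : lin (Qop eta tauI).
Proof.
split.
- by move=> f hf; apply: bm_sub => //; exact: Pop_bm.
- move=> f g hf hg; rewrite /Qop Pop_add //; apply/funext => a /=.
  by rewrite opprD addrACA.
- move=> c f hf; rewrite /Qop Pop_scale //; apply/funext => a /=.
  by rewrite mulrBr.
Qed.

Lemma lin_comp {F G} : lin F -> lin G -> lin (fun f => F (G f)).
Proof.
case=> F1 F2 F3 [G1 G2 G3]; split.
- by move=> f hf; apply: F1; apply: G1.
- by move=> f g hf hg; rewrite G2 // F2 //; apply: G1.
- by move=> c f hf; rewrite G3 // F3 //; apply: G1.
Qed.

Lemma lin_iter {F} n : lin F -> lin (iter n F).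
Proof.
move=> hF; elim: n => [|n IH].
  have -> : iter 0 F = id by apply/funext.
  by split.
have -> : iter n.+1 F = (fun f => F (iter n F f)) by apply/funext.
exact: (lin_comp hF IH).
Qed.

Definition Bop := fun g => Qop eta tauI (Top T g).

Lemma lin_B : lin Bop.
Proof. exact: lin_comp lin_Qop lin_Top. Qed.

Lemma lin_PAB j : lin (fun g => Pop eta tauI (Top T (iter j Bop g))).
Proof. exact: lin_comp lin_Pop (lin_comp lin_Top (lin_iter j lin_B)). Qed.

Lemma lin_K m : lin (Kop T eta tauI m).
Proof. exact: lin_PAB. Qed.

Lemma bm_sum (s : seq (mstate k)) (c : mstate k -> R) (h : mstate k -> S -> R) :
  (forall K, bmf (h K)) -> bmf (fun a => \sum_(K <- s) c K * h K a).
Proof.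
move=> hh; elim: s => [|K s IH].
  by under [X in bmf X]funext do rewrite big_nil; exact: bm0.
under [X in bmf X]funext do rewrite big_cons.
by apply: bm_add => //; exact: bm_scale.
Qed.

Lemma lin0 {F} : lin F -> F (fun _ => 0) = (fun _ => 0).
Proof.
case=> _ _ F3; have := F3 0 (fun _ => 0) bm0.
have -> : (fun _ : S => 0 * 0 : R) = (fun _ => 0) by apply/funext => x; rewrite mul0r.
by move=> ->; apply/funext => a; rewrite mul0r.
Qed.

Lemma lin_sum {F} (s : seq (mstate k)) (c : mstate k -> R) (h : mstate k -> S -> R) :
  lin F -> (forall K, bmf (h K)) ->
  F (fun a => \sum_(K <- s) c K * h K a) = (fun a => \sum_(K <- s) c K * F (h K) a).
Proof.
move=> hF hh; elim: s => [|K s IH].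
  under [X in F X]funext do rewrite big_nil.
  by rewrite lin0 //; apply/funext => a; rewrite big_nil.
under [X in F X]funext do rewrite big_cons.
case: (hF) => F1 F2 F3.
rewrite F2 //; last exact: bm_sum; last exact: bm_scale.
rewrite IH F3 //; apply/funext => a; by rewrite big_cons.
Qed.

End ops.


Section alg.
Context {R : realType} {dE : measure_display} {E : measurableType dE} {k : nat}.
Local Notation S := (aug E k R).
Variables (T : R.-pker S ~> S) (eta : mstate k -> probability E R) (tauI : mstate k -> R).
Local Notation A := (Top T).
Local Notation P := (Pop eta tauI).
Local Notation B := (Bop T eta tauI).

Lemma main_alg r : forall j (f : S -> R) a, bmf f -> P f = f ->
  P (A (iter j B (iter r A f))) a =
  \sum_(0 <= i < r.+1) Kop T eta tauI (j + i).+1 (P (iter (r - i) A f)) a.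
Proof.
elim: r => [|r IH] j f a hf Pf.
  by rewrite big_nat1 addn0 subnn /= Pf.
have bmi : forall n, bmf (iter n A f).
  by move=> n; case: (lin_iter n (lin_Top T)) => H _ _; apply: H.
set g' := iter r.+1 A f.
have e : g' = (fun a => P g' a + B (iter r A f) a).
  apply/funext => b; rewrite /Bop /Qop /g' /=; by rewrite addrC subrK.
rewrite e.
case: (lin_PAB T eta tauI j) => _ H2 _.
have bP : bmf (P g') by case: (lin_Pop eta tauI) => H _ _; apply: H; exact: bmi.
have bB : bmf (B (iter r A f)) by case: (lin_B T eta tauI) => H _ _; apply: H; exact: bmi.
rewrite H2 //.
rewrite /=.
have -> : iter j B (B (iter r A f)) = iter j.+1 B (iter r A f) by rewrite iterSr.
rewrite IH //.
rewrite big_nat_recl // addn0 subn0.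
congr (_ + _).
apply: eq_bigr => i _.
by rewrite addnS addSn subSS.
Qed.
End alg.


Section kers.
Context {R : realType} {dO dS : measure_display} {Om : measurableType dO}
  {S : measurableType dS}.
Variables (Pa : probability Om R) (T : R.-pker S ~> S) (Zn : Om -> S).

Definition lk (_ : S) : {measure set Om -> \bar R} := Pa.

Let mlk U : measurable U -> measurable_fun setT (lk ^~ U).
Proof. by move=> _; exact: measurable_cst. Qed.

HB.instance Definition _ := isKernel.Build _ _ _ _ _ lk mlk.

Let lk1 x : lk x setT = 1%E. Proof. exact: probability_setT. Qed.

HB.instance Definition _ := Kernel_isProbability.Build _ _ _ _ _ lk lk1.

Definition kk (mZn : measurable_fun setT Zn) (p : S * Om) : {measure set S -> \bar R} := T (Zn p.2).
Hypothesis mZn : measurable_fun setT Zn.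

Let mkk U : measurable U -> measurable_fun setT (kk mZn ^~ U).
Proof.
move=> mU; apply: (measurableT_comp (measurable_kernel T U mU)).
exact: (measurableT_comp mZn).
Qed.

HB.instance Definition _ := isKernel.Build _ _ _ _ _ (kk mZn) mkk.

Let kk1 x : kk mZn x setT = 1%E. Proof. exact: prob_kernel. Qed.

HB.instance Definition _ := Kernel_isProbability.Build _ _ _ _ _ (kk mZn) kk1.

Lemma kcomp_int x (f : S -> \bar R) : (forall z, (0 <= f z)%E) -> measurable_fun setT f ->
  (\int[kcomp lk (kk mZn) x]_z f z = \int[Pa]_w (\int[T (Zn w)]_z f z))%E.
Proof. move=> f0 mf; exact: (integral_kcomp lk (kk mZn) x f0 mf). Qed.

End kers.
Arguments kk {R dO dS Om S} T {Zn}.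

Section markov.
Context {R : realType} {dE dO : measure_display} {E : measurableType dE} {k : nat}
  {Om : measurableType dO}.
Local Notation S := (aug E k R).
Variables (T : R.-pker S ~> S) (Pr : S -> probability Om R) (Z : nat -> Om -> S).
Hypothesis HM : augmented_markov_chain T Pr Z.

Lemma markov1 a n U : measurable U ->
  Pr a (Z n.+1 @^-1` U) = (\int[Pr a]_(w in setT) T (Z n w) U)%E.
Proof.
move=> mU; case: HM => _ _ H3.
pose Ai := fun i => if i == n.+1 then U else setT.
have mA : forall i, measurable (Ai i) by move=> i; rewrite /Ai; case: ifP.
have := H3 a n Ai mA.
have -> : \bigcap_(i < n.+2) (Z i @^-1` Ai i) = Z n.+1 @^-1` U.
  apply/seteqP; split => w.
    by move=> /(_ n.+1 (ltnSn _)); rewrite /Ai eqxx.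
  move=> hw i _; rewrite /Ai; case: ifP => [/eqP -> //|_ //].
have -> : \bigcap_(i < n.+1) (Z i @^-1` Ai i) = setT.
  apply/seteqP; split => w // _ i /= hi; rewrite /Ai.
  by case: ifP => [/eqP e|//]; move: hi; rewrite e ltnn.
by rewrite /Ai eqxx.
Qed.

Lemma Top_E g b : bmf g -> ((Top T g b)%:E = \int[T b]_(x in setT) (g x)%:E)%E.
Proof.
move=> hg; rewrite /Top /Rintegral fineK //.
apply: integrable_fin_num => //; exact: (bm_int _ (T1 T b) hg).
Qed.

Lemma step g n a : bmf g -> (forall b, 0 <= g b) ->
  (\int[Pr a]_(w in setT) (g (Z n.+1 w))%:E =
   \int[Pr a]_(w in setT) (Top T g (Z n w))%:E)%E.
Proof.
move=> hg g0; case: (HM) => mZ _ _.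
have mg : measurable_fun setT (fun x => (g x)%:E) by apply/measurable_EFinP; exact: hg.1.
transitivity (\int[pushforward (Pr a) (Z n.+1)]_(y in setT) (g y)%:E)%E.
  rewrite ge0_integral_pushforward //; last by move=> y _; rewrite lee_fin.
transitivity (\int[kcomp (lk (Pr a)) (kk T (mZ n)) a]_(y in setT) (g y)%:E)%E.
  apply: eq_measure_integral => U mU _.
  exact: (markov1 a n _ mU).
have g0E : forall z, (0 <= (g z)%:E)%E by move=> z; rewrite lee_fin.
rewrite (@kcomp_int _ _ _ _ _ _ _ _ (mZ n) a (fun y => (g y)%:E)) //.
by apply: eq_integral => w _; rewrite Top_E.
Qed.


Lemma Top_ge0 g : (forall b, 0 <= g b) -> forall b, 0 <= Top T g b.
Proof. by move=> g0 b; apply: Rintegral_ge0 => x _. Qed.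

Lemma markov_int n : forall g, bmf g -> (forall b, 0 <= g b) -> forall a,
  (\int[Pr a]_(w in setT) (g (Z n w))%:E)%E = (iter n (Top T) g a)%:E.
Proof.
case: (HM) => mZ H2 _.
elim: n => [|n IH] g hg g0 a.
  have mg : measurable_fun setT (fun x => (g x)%:E) by apply/measurable_EFinP; exact: hg.1.
  transitivity (\int[pushforward (Pr a) (Z 0)]_(y in setT) (g y)%:E)%E.
    by rewrite ge0_integral_pushforward //; move=> y _; rewrite lee_fin.
  transitivity (\int[\d_a]_(y in setT) (g y)%:E)%E.
    apply: eq_measure_integral => U mU _.
    exact: (H2 a U mU).
  by rewrite integral_dirac // diracT mul1e.
rewrite step // IH //.
- by rewrite iterSr.
- exact: (Top_bm T).
- exact: Top_ge0.
Qed.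

Lemma meas_set2 (J : mstate k) : measurable [set b : S | b.1.2 = J].
Proof.
have -> : [set b : S | b.1.2 = J] = (fun b : S => b.1.2) @^-1` [set J] by [].
rewrite -[X in measurable X]setTI.
have mf : measurable_fun setT (fun b : S => b.1.2).
  by apply: measurableT_comp => //; apply: measurableT_comp.
exact: mf.
Qed.

Lemma prob_iter n (J : mstate k) a :
  fine (Pr a [set w | (Z n w).1.2 = J]) = iter n (Top T) (chi J) a.
Proof.
case: (HM) => mZ _ _.
have hc : bmf (chi J : S -> R) by exact: (bm_fst2 (fun I => (I == J)%:R)).
have c0 : forall b, 0 <= (chi J : S -> R) b by move=> b; rewrite /chi ler0n.
transitivity (fine ((iter n (Top T) (chi J) a)%:E)); last by []. rewrite -(markov_int n (chi J) hc c0) /=. congr fine.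
have mP : measurable (Z n @^-1` [set b : S | b.1.2 = J]).
  rewrite -[X in measurable X]setTI; exact: mZ (meas_set2 J).
have -> : (fun w => (chi J (Z n w))%:E) = (fun w => (\1_(Z n @^-1` [set b : S | b.1.2 = J]) w)%:E).
  apply/funext => w; rewrite /chi indicE; congr (_%:R)%:E.
  by case: eqP => [e|ne]; [rewrite mem_set | rewrite memNset].
by rewrite integral_indic // setIT.
Qed.

End markov.


Theorem theorem2 (R : realType) (dE dO : measure_display)
  (E : measurableType dE) (k : nat) (macro : E -> mstate k)
  (Om : measurableType dO) (tau : R) (tauI : mstate k -> R)
  (eta : mstate k -> probability E R)
  (T : R.-pker aug E k R ~> aug E k R)
  (Pr : aug E k R -> probability Om R) (Z : nat -> Om -> aug E k R) :
  0 < tau ->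
  (forall I, 0 < tauI I) ->
  (forall I, measurable (macro @^-1` [set I])) ->
  (forall I, eta I [set x | macro x <> I] = 0%E) ->
  augmented_markov_chain T Pr Z ->
  forall n : nat, (1 <= n)%N ->
  forall (I J : mstate k) (x : E) (s : R),
    Tmat eta tauI Pr Z n I J =
    \sum_(1 <= m < n.+1) \sum_(K : mstate k)
       Kmat T eta tauI m I K x s * Tmat eta tauI Pr Z (n - m) K J.
Proof.
move=> _ _ _ _ HM n n1 I J x s.
have TmatE : forall r K (b : aug E k R), b.1.2 = K ->
    Tmat eta tauI Pr Z r K J = Pop eta tauI (iter r (Top T) (chi J)) b.
  move=> r K b e; rewrite /Tmat /Pop e; apply: eq_Rintegral => z _.
  by rewrite (prob_iter _ _ _ HM).
have hc : forall K, bmf (chi K : aug E k R -> R).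
  by move=> K; exact: (bm_fst2 (fun I => (I == K)%:R)).
have Pchi : Pop eta tauI (chi J) = chi J.
  apply/funext => a; rewrite /Pop /chi /= Rintegral_cst //.
  rewrite -[RHS]mulr1; congr (_ * _); apply: (@eq_trans _ _ (fine 1%E)) => //; congr fine; exact: probability_setT.
have sumE : forall (c : mstate k -> R) (a : aug E k R),
    \sum_(K : mstate k) c K * chi K a = c a.1.2.
  move=> c a; rewrite (bigD1 a.1.2) //= /chi eqxx mulr1 big1 ?addr0 //.
  by move=> K /negbTE; rewrite eq_sym => ->; rewrite mulr0.
case: n n1 => [//|r] _.
rewrite (TmatE r.+1 I (x, I, s)) //.
rewrite (main_alg T eta tauI r 0 (chi J) (x, I, s) (hc J) Pchi).
rewrite big_add1 /=.
apply: eq_bigr => i _.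
have -> : Pop eta tauI (iter (r - i)%N (Top T) (chi J)) =
    (fun a => \sum_(K : mstate k) Tmat eta tauI Pr Z (r - i)%N K J * chi K a).
  by apply/funext => a; rewrite sumE (TmatE (r - i)%N a.1.2 a).
rewrite (lin_sum _ _ _ (lin_K T eta tauI (0 + i).+1) hc).
apply: eq_bigr => K _; rewrite subSS add0n mulrC.
by [].
Qed.
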